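(* Let $L\ge1$ be an integer and $r\in[0,\frac{L}{L+1})$. There exists $N=N(r,L)$ such that for all integers $q\ge 2$ with $L\le q$ and all $n\ge N$ with $rn\in\mathbb{N}$ and $rn\equiv L-1\pmod L$, every $(r,L)$ list-decodable code $C\subseteq[q]^n$ satisfies $|C|\le q^{\,n-\lfloor\frac{L+1}{L}rn\rfloor}$.
   Context: $[q]=\{1,\dots,q\}$. A code is a subset $C\subseteq[q]^n$. $B_t(v)$ denotes the Hamming ball of radius $t$ around $v\in[q]^n$ (Hamming distance = number of differing coordinates). A code $C$ is $(r,L)$ list-decodable if $|B_{rn}(v)\cap C|\le L$ for all $v\in[q]^n$. *)

(* Defs.v *)
From HB Require Import structures.
From mathcomp Require Import all_boot all_order all_algebra.
From mathcomp Require Import reals.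
Set Implicit Arguments. Unset Strict Implicit. Unset Printing Implicit Defensive.
Import Order.TTheory GRing.Theory Num.Theory.

(* Words of length n over the alphabet [q] = 'I_q (0-based relabelling). *)
Definition word (q n : nat) := {ffun 'I_n -> 'I_q}.

Definition hamming (q n : nat) (u v : word q n) : nat :=
  #|[set i : 'I_n | u i != v i]|.

Definition list_decodable (R : realType) (q n : nat) (r : R) (L : nat)
  (C : {set word q n}) : Prop :=
  forall v : word q n,
    (#|[set c in C | ((hamming c v)%:R <= r * n%:R)%R]| <= L)%N.

(* Main.v *)
Require Import Defs.
From HB Require Import structures.
From mathcomp Require Import all_boot all_order all_algebra.
From mathcomp Require Import reals.
From mathcomp Require Import zify ring.
Import Order.TTheory GRing.Theory Num.Theory.
Lemma card_range n lo hi : (hi <= n)%N ->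
  #|[set i : 'I_n | (lo <= i < hi)%N]| = (hi - lo)%N.
Proof.
elim: hi => [|hi IH] hn.
  rewrite sub0n; apply/eqP; rewrite cards_eq0; apply/eqP/setP => i.
  by rewrite !inE ltn0 andbF.
have hn' : (hi < n)%N by [].
case: (leqP lo hi) => hlo.
  have -> : [set i : 'I_n | (lo <= i < hi.+1)%N] =
            Ordinal hn' |: [set i : 'I_n | (lo <= i < hi)%N].
    apply/setP => i; rewrite !inE -val_eqE /= ltnS [(i <= hi)%N]leq_eqVlt.
    case: (ltngtP i hi) => h /=; rewrite ?andbT ?andbF ?orbF //.
    by rewrite h hlo.
      rewrite cardsU1 IH ?(ltnW hn) // !inE ltnn andbF /=.
  lia.
rewrite (_ : hi.+1 - lo = 0)%N; last by lia.
apply/eqP; rewrite cards_eq0; apply/eqP/setP => i; rewrite !inE.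
apply/negbTE; apply/negP => /andP [h1 h2]; lia.
Qed.

Lemma ham_bound (q n : nat) (c v : word q n) s lo m :
  (s <= lo)%N -> (lo + m.+1 <= n)%N ->
  (forall i : 'I_n, (i < s)%N -> c i = v i) ->
  (forall i : 'I_n, (lo <= i < lo + m.+1)%N -> c i = v i) ->
  (hamming c v <= n - s - m.+1)%N.
Proof.
move=> hs hl h1 h2; rewrite /hamming.
have sub : [set i : 'I_n | c i != v i] \subset
  [set i : 'I_n | (s <= i < lo)%N] :|: [set i : 'I_n | (lo + m.+1 <= i < n)%N].
  apply/subsetP => i; rewrite !inE => /eqP ne.
  case: (ltnP i s) => [/h1 //|is_].
  case: (ltnP i lo) => il //=.
  case: (ltnP i (lo + m.+1)) => ih //=.
  by exfalso; apply: ne; apply: h2; rewrite il ih.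
apply: leq_trans (subset_leq_card sub) _.
apply: leq_trans (leq_card_setU _ _) _.
rewrite !card_range //; lia.
Qed.

Lemma fiber_big (T U : finType) (f : T -> U) (A : {set T}) k :
  (k * #|U| < #|A|)%N -> exists u, (k < #|[set x in A | f x == u]|)%N.
Proof.
move=> hA.
case: (boolP [exists u, (k < #|[set x in A | f x == u]|)%N]) => [/existsP //|/existsPn H].
exfalso; move: hA; apply/negP; rewrite -leqNgt.
rewrite -sum1_card (partition_big f predT) //=.
apply: (@leq_trans (\sum_(u : U) k)); last first.
  by rewrite sum_nat_const mulnC.
apply: leq_sum => u _.
have := H u; rewrite -leqNgt => Hu; apply: leq_trans Hu.
by rewrite -sum1_card; apply: eq_leq; apply: eq_bigl => x; rewrite !inE.
Qed.

Lemma pair_eq (T : finType) q (g : T -> 'I_q) (F : {set T}) :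
  (q < #|F|)%N -> exists a b, [/\ a \in F, b \in F, a != b & g a = g b].
Proof.
move=> hF.
case: (boolP [exists a in F, exists b in F, (a != b) && (g a == g b)]).
  by move=> /existsP [a /andP [aF /existsP [b /andP [bF /andP [ab /eqP gab]]]]]; exists a, b.
move=> /existsPn H; exfalso.
have inj : {in F &, injective g}.
  move=> a b aF bF gab; case: (eqVneq a b) => // nab; exfalso.
  move: (H a); rewrite aF /= => /existsPn /(_ b); rewrite bF nab gab eqxx.
  done.
have := max_card (g @: F); rewrite card_in_imset // card_ord.
by rewrite leqNgt hF.
Qed.
Lemma hkL_aux k m L : 0 < L -> k = m * L + (L - 1) -> k = ((L - 1) * m.+1 + m)%N.
Proof. move=> L1 ->. case: L L1 => // L _. rewrite subn1 /= mulnS mulnC mulnS; lia. Qed.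
Lemma hn_aux k m L : 0 < L -> k = m * L + (L - 1) -> (L * (k + m + 1) = (L + 1) * k + 1)%N.
Proof. move=> L1 ->. case: L L1 => // L _. rewrite subn1 /= !mulnDr !mulnDl. rewrite (mulnC L.+1 m). lia. Qed.

Theorem corollary3p3 (R : realType) (L : nat) (r : R) :
  (1 <= L)%N ->
  (0 <= r)%R -> (r < L%:R / (L + 1)%:R)%R ->
  exists N : nat, forall q n : nat,
    (2 <= q)%N -> (L <= q)%N -> (N <= n)%N ->
    forall k : nat, (r * n%:R = k%:R)%R -> k = (L - 1)%N %[mod L] ->
    forall C : {set word q n}, list_decodable r L C ->
      (#|C| <= q ^ (n - ((L + 1) * k) %/ L))%N.
Proof.
move=> L1 r0 rL; exists 1%N => q n q2 Lq n1 k rnk kmod C LD.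
set m := (k %/ L)%N.
have km : k = (m * L + (L - 1))%N.
  rewrite {1}(divn_eq k L) kmod modn_small //; lia.
have tE : ((L + 1) * k %/ L = k + m)%N.
  by rewrite mulnDl mul1n mulnC divnMDl.
clearbody m.
have mk : (m <= k)%N by rewrite km; apply: leq_trans (leq_addr _ _); rewrite leq_pmulr.
have hkL : k = ((L - 1) * m.+1 + m)%N.
  exact: (hkL_aux _ _ _ L1 km).
have hk : ((L + 1) * k < L * n)%N.
  rewrite -(ltr_nat R) !natrM -rnk.
  have rL' : (r * (L + 1)%:R < L%:R)%R.
    by rewrite -ltr_pdivlMr // ltr0n addn1.
  rewrite (_ : ((L + 1)%:R * (r * n%:R) = (r * (L + 1)%:R) * n%:R)%R); last by ring.
  by rewrite ltr_pM2r // ltr0n.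
have hn : (k + m + 1 <= n)%N.
  rewrite -(@leq_pmul2l L) //.
  rewrite (hn_aux _ _ _ L1 km).
  lia.
rewrite tE.
set s := (n - (k + m) - 1)%N.
have nE : n = (s + k + m + 1)%N by rewrite /s; lia.
rewrite leqNgt; apply/negP => HC.
have hs : (s <= n)%N by lia.
pose f := fun c : word q n => [ffun i : 'I_s => c (widen_ord hs i)].
have [u hu] : exists u, (q < #|[set x in C | f x == u]|)%N.
  apply: fiber_big; rewrite card_ffun !card_ord -expnS.
  by move: HC; rewrite (_ : (n - (k + m)) = s.+1)%N //; lia.
set F := [set x in C | f x == u] in hu.
have FC : forall c, c \in F -> c \in C by move=> c; rewrite inE => /andP [].
have Fag : forall c d, c \in F -> d \in F -> forall i : 'I_n, (i < s)%N -> c i = d i.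
  move=> c d; rewrite !inE => /andP [_ /eqP fc] /andP [_ /eqP fd] i his.
  have := congr1 (fun g : {ffun 'I_s -> 'I_q} => g (Ordinal his)) (etrans fc (esym fd)).
  rewrite /f /= !ffunE.
  by have -> : widen_ord hs (Ordinal his) = i by apply: val_inj.
have hp : (s + m < n)%N by lia.
pose p := Ordinal hp.
have [a [b [aF bF ab gab]]] := @pair_eq _ _ (fun c : word q n => c p) _ hu.
set F' := F :\ a :\ b.
have cF : #|F| = (#|F'| + 2)%N.
  rewrite (cardsD1 a F) aF (cardsD1 b (F :\ a)) in_setD1 eq_sym ab bF /=; rewrite /F' add1n add1n addn2; reflexivity.
set E := enum F'.
have sE : (L - 1 <= size E)%N.
  rewrite /E -cardE; lia.
have uE : uniq E by apply: enum_uniq.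
have EF' : forall j, (j < L - 1)%N -> nth a E j \in F'.
  by move=> j hj; rewrite -mem_enum mem_nth //; apply: leq_trans sE.
have EF : forall j, (j < L - 1)%N -> nth a E j \in F.
  by move=> j /EF'; rewrite !inE => /and3P [].
pose v : word q n := [ffun i : 'I_n => if (i < s + m.+1)%N then a i
   else if (i < s + m.+1 + m)%N then b i
   else (nth a E ((i - (s + m.+1 + m)) %/ m.+1)) i].
have hkn : (n - s - m.+1 = k)%N by lia.
have ball : forall c, c \in a |: (b |: [set nth a E (val j) | j : 'I_(L - 1)]) ->
   c \in [set c in C | ((hamming c v)%:R <= r * n%:R)%R].
  move=> c hc; rewrite inE rnk ler_nat -hkn; move: hc.
  case/setU1P => [->|]; last case/setU1P => [->|].
  - rewrite FC //=; apply: (@ham_bound _ _ _ _ s (s) m) => //; first by lia.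
      by move=> i his; rewrite ffunE (_ : (i < s + m.+1)%N) //; lia.
    by move=> i /andP [h1 h2]; rewrite ffunE h2.
  - rewrite FC //=; apply: (@ham_bound _ _ _ _ s (s + m) m) => //; first by lia.
      by lia.
      move=> i his; rewrite ffunE (_ : (i < s + m.+1)%N); last by lia.
      by apply: Fag.
    move=> i /andP [h1 h2]; rewrite ffunE.
    case: ifP => h3.
      have -> : i = p by apply: val_inj => /=; lia.
      by rewrite gab.
    by rewrite (_ : (i < s + m.+1 + m)%N) //; lia.
  - case/imsetP => j _ ->.
    rewrite FC ?EF //=.
    apply: (@ham_bound _ _ _ _ s (s + m.+1 + m + j * m.+1) m) => //; first by lia.
      have hj : (j.+1 * m.+1 <= (L - 1) * m.+1)%N by rewrite leq_mul2r ltn_ord orbT.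
      rewrite mulSn in hj; lia.
      move=> i his; rewrite ffunE (_ : (i < s + m.+1)%N); last by lia.
      by apply: Fag => //; apply: EF.
    move=> i /andP [h1 h2]; rewrite ffunE.
    rewrite (_ : (i < s + m.+1)%N = false); last by lia.
    rewrite (_ : (i < s + m.+1 + m)%N = false); last by lia.
    congr (nth a E _ i).
    rewrite (_ : (i - (s + m.+1 + m) = j * m.+1 + (i - (s + m.+1 + m + j * m.+1)))%N); last by lia.
    rewrite divnMDl // divn_small ?addn0 //; lia.
have := LD v; apply/negP; rewrite -ltnNge.
have sub : (a |: (b |: [set nth a E (val j) | j : 'I_(L - 1)])) \subset [set c in C | ((hamming c v)%:R <= r * n%:R)%R] by apply/subsetP.
apply: leq_trans (subset_leq_card sub).
rewrite !cardsU1 card_imset; last first.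
  move=> j1 j2 /eqP; rewrite nth_uniq // ?(leq_trans (ltn_ord _) sE) //.
  by move/eqP/val_inj.
rewrite card_ord !inE negb_or ab /=.
have anI : a \notin [set nth a E (val j) | j : 'I_(L - 1)].
  apply/imsetP => -[j _ ej].
  by move: (EF' j (ltn_ord j)); rewrite -ej !inE eqxx andbF.
have bnI : b \notin [set nth a E (val j) | j : 'I_(L - 1)].
  apply/imsetP => -[j _ ej].
  by move: (EF' j (ltn_ord j)); rewrite -ej !inE eqxx.
rewrite anI bnI /=; lia.
Qed.
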